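(* For integers $I\ge 0$ and $S\ge 1$ let $P(I,S)$ be the probability, in the Bluetooth pairing process described in the context, that a fixed clean device $w_t$ ends up paired with an infected device. Then $P(0,S)=0$ and $P(1,S)=\frac{1}{S}$ for every $S\ge 1$, and for all integers $I\ge 2$, $S\ge 1$, $$P(I,S)=\frac{1}{I+S-1}+\frac{S-1}{I+S-1}\,P(I-1,S-1)+\frac{I-1}{I+S-1}\,P(I-2,S),$$ with the convention $P(I',0)=0$ for every $I'\ge 0$ (the term $P(I-1,S-1)$ appears only with coefficient $0$ when $S=1$).
   Context: Pairing process: let $I,S\ge 0$ be integers. There are $I$ infected devices $b_1,\dots,b_I$ and $S$ clean devices $w_1,\dots,w_S$. For $t=1,2,\dots,I$ in this order: if $b_t$ is not yet paired and at least one device other than $b_t$ (infected or clean) is not yet paired, then $b_t$ chooses one of the currently unpaired devices other than itself uniformly at random, independently of all previous choices, and becomes paired with it; otherwise $b_t$ does nothing. Each device belongs to at most one pair, and pairs are never broken. A clean device that ends up paired with an infected device becomes infected; clean devices never initiate pairings. The probability $P(I,S)$ does not depend on which clean device $w_t$ is fixed. *)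

(* Defs.v *)
From mathcomp Require Import all_boot all_order all_algebra.
Set Implicit Arguments. Unset Strict Implicit. Unset Printing Implicit Defensive.
Import Order.TTheory GRing.Theory Num.Theory.
Local Open Scope ring_scope.

(* Devices: infected b_t = inl t (t : 'I_I), clean w_j = inr j (j : 'I_S). *)
Definition dev (I S : nat) : finType := ('I_I + 'I_S)%type.

(* A (partial) pairing: p x = Some y means x is paired with y; None = unpaired. *)
Definition pairing (I S : nat) := {ffun dev I S -> option (dev I S)}.

Definition empty_pairing (I S : nat) : pairing I S := [ffun _ => None].

Definition pair_up (I S : nat) (p : pairing I S) (b c : dev I S) : pairing I S :=
  [ffun x => if x == b then Some c else if x == c then Some b else p x].

(* Expected value of the payoff f on the final pairing, when the infected
   devices b_t for t in ts act in order, starting from pairing p.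
   If b_t is unpaired and the list C of unpaired devices other than b_t is
   nonempty, b_t picks c uniformly in C; otherwise b_t does nothing. *)
Fixpoint run (I S : nat) (ts : seq 'I_I) (f : pairing I S -> rat)
    (p : pairing I S) : rat :=
  match ts with
  | [::] => f p
  | t :: ts' =>
      let b : dev I S := inl t in
      let C := [seq x <- enum (dev I S) | (x != b) && (p x == None)] in
      if (p b == None) && (0 < size C)%N then
        (\sum_(c <- C) run ts' f (pair_up p b c)) / (size C)%:R
      else run ts' f p
  end.

Definition w_infected (I S : nat) (j : 'I_S) (p : pairing I S) : rat :=
  match p (inr j) with
  | Some (inl _) => 1
  | _ => 0
  end.

Definition Pw (I S : nat) (j : 'I_S) : rat :=
  run (enum 'I_I) (@w_infected I S j) (empty_pairing I S).

(* P(I,S): the (j-independent) probability, read at w_0; convention P(I,0)=0. *)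
Definition P (I S : nat) : rat :=
  match S with
  | 0 => 0
  | S'.+1 => Pw I (@ord0 S')
  end.

(* Main.v *)
Require Import Defs.
From mathcomp Require Import all_boot all_order all_algebra.
From mathcomp Require Import ring lra zify.
Import GRing.Theory Num.Theory.
Set Implicit Arguments. Unset Strict Implicit. Unset Printing Implicit Defensive.
Local Open Scope ring_scope.

Definition isInf I S (ts : seq 'I_I) (x : dev I S) : bool :=
  match x with inl u => u \in ts | inr _ => false end.
Definition isOut I S (ts : seq 'I_I) (x : dev I S) : bool :=
  match x with inl u => u \notin ts | inr _ => false end.
Definition isCl I S (j : 'I_S) (x : dev I S) : bool :=
  match x with inl _ => false | inr k => k != j end.

Lemma pair_upE I S (p : pairing I S) b c x :
  pair_up p b c x = if x == b then Some c else if x == c then Some b else p x.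
Proof. by rewrite ffunE. Qed.

Lemma pair_up_None I S (p : pairing I S) b c x :
  (pair_up p b c x == None) = [&& x != b, x != c & p x == None].
Proof. by rewrite pair_upE; case: (x == b); case: (x == c). Qed.

Lemma card_pair I S (Q : pred (dev I S)) (p : pairing I S) b c :
  b != c -> p b = None -> p c = None ->
  #|[pred x | Q x && (p x == None)]| =
  (Q b + Q c + #|[pred x | Q x && (pair_up p b c x == None)]|)%N.
Proof.
move=> bc pb pc; rewrite (cardD1 b) (cardD1 c) !inE pb pc !eqxx !andbT.
rewrite eq_sym bc /= addnA; congr (_ + _)%N.
apply: eq_card => x; rewrite !inE pair_up_None.
by case: (x == b); case: (x == c); case: (Q x).
Qed.

Lemma sum_const_pred (T : finType) (P : pred T) (x : rat) :
  \sum_(i | P i) x = x *+ #|P|.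
Proof. by rewrite -sumr_const; apply: eq_bigl. Qed.

Lemma run_paired I S (j : 'I_S) ts (p : pairing I S) :
  p (inr j) != None -> run ts (@w_infected I S j) p = w_infected j p.
Proof.
elim: ts p => [|t ts IH] p Hp //=.
case: ifP => [/andP [pb Cpos]|_]; last exact: IH.
set C := [seq _ <- _ | _].
have E : forall c, c \in C -> run ts (@w_infected I S j) (pair_up p (inl t) c) = w_infected j p.
  move=> c; rewrite mem_filter => /andP [/andP [cb pc] _].
  have Hq : pair_up p (inl t) c (inr j) = p (inr j).
    rewrite pair_upE; case: eqP => [//|_].
    by case: eqP => // e; rewrite e pc in Hp.
  rewrite IH; last by rewrite Hq.
  by rewrite /w_infected Hq.
rewrite (eq_big_seq (fun _ => w_infected j p)) //.
rewrite big_const_seq count_predT -[in RHS](mulr1 (w_infected j p)).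
have -> : forall n (y : rat), iter n (fun x => y + x) 0 = y *+ n.
  by move=> n y; elim: n => //= n ->; rewrite mulrS.
rewrite -mulr_natr.
have nz : (size C)%:R != 0 :> rat by rewrite pnatr_eq0 -lt0n.
rewrite -mulr_natr; field; exact: nz.
Qed.
Lemma inr_eq I S (k j : 'I_S) : (inr k == inr j :> dev I S) = (k == j).
Proof. by apply/eqP/eqP => [[]|->]. Qed.
Lemma inl_eq I S (k j : 'I_I) : (inl k == inl j :> dev I S) = (k == j).
Proof. by apply/eqP/eqP => [[]|->]. Qed.
Lemma inlr_eq I S (k : 'I_I) (j : 'I_S) : (inl k == inr j :> dev I S) = false.
Proof. by apply/eqP. Qed.
Lemma inrl_eq I S (k : 'I_I) (j : 'I_S) : (inr j == inl k :> dev I S) = false.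
Proof. by apply/eqP. Qed.

Lemma decomp I S (j : 'I_S) (t : 'I_I) ts (p : pairing I S) (h : dev I S -> rat) :
  t \notin ts -> p (inr j) = None ->
  \sum_(c : dev I S | (c != inl t) && (p c == None)) h c =
  h (inr j) + \sum_(c : dev I S | isCl j c && (p c == None)) h c
  + \sum_(c : dev I S | isInf ts c && (p c == None)) h c
  + \sum_(c : dev I S | isOut (t :: ts) c && (p c == None)) h c.
Proof.
move=> tts pj.
rewrite (bigID (fun c => c == inr j)).
rewrite (big_pred1 (inr j)); last first.
  move=> c /=; case: (boolP (c == inr j)) => [/eqP->|_]; rewrite ?andbT ?andbF //= pj ?eqxx //.
rewrite -!addrA; congr (_ + _).
rewrite (bigID (isCl j)).
rewrite (eq_bigl (fun c => isCl j c && (p c == None))); last first.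
  move=> [u|k] /=. by rewrite andbF.
  by rewrite inr_eq; case: (k != j); rewrite ?andbT ?andbF.
congr (_ + _).
rewrite (bigID (isInf ts)).
congr (_ + _); apply: eq_bigl => [[u|k]] /=; rewrite ?inl_eq ?inr_eq ?inlr_eq ?inrl_eq /=.
all: try by rewrite !andbF.
- rewrite !andbT; case: (boolP (u \in ts)) => uts; rewrite ?andbT ?andbF //.
  by have -> : u != t by apply: contraNneq tts => <-.
- rewrite in_cons negb_or !andbT; case: (boolP (u \in ts)) => uts; rewrite ?andbT ?andbF //.
- by case: (k != j); rewrite ?andbF.
Qed.

Fixpoint Vf (n a s o : nat) : rat :=
  match n with
  | 0 => 0
  | n'.+1 =>
    match a with
    | 0 => 0
    | a'.+1 => (1 + s%:R * Vf n' a' s.-1 o + a'%:R * Vf n' a'.-1 s o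
                + o%:R * Vf n' a' s o.-1) / (1 + s + a' + o)%:R
    end
  end.

Lemma Vf_fuel n m a s o : (a < n)%N -> (a < m)%N -> Vf n a s o = Vf m a s o.
Proof.
elim: n m a s o => [|n IH] [|m] [|a] s o //= an am.
rewrite (IH m a s.-1 o) // (IH m a s o.-1) // (IH m a.-1 s o) //;
  exact: leq_ltn_trans (leq_pred a) _.
Qed.

Definition cnt I S (Q : pred (dev I S)) (p : pairing I S) : nat :=
  #|[pred x | Q x && (p x == None)]|.

Lemma cnt_pair I S (Q : pred (dev I S)) (p : pairing I S) b c :
  b != c -> p b = None -> p c = None ->
  cnt Q p = (Q b + Q c + cnt Q (pair_up p b c))%N.
Proof. exact: card_pair. Qed.

Lemma cnt_D1 I S (Q1 Q2 : pred (dev I S)) (p : pairing I S) b :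
  Q1 b -> ~~ Q2 b -> p b = None -> (forall x, x != b -> Q1 x = Q2 x) ->
  cnt Q1 p = (cnt Q2 p).+1.
Proof.
move=> q1 q2 pb E; rewrite /cnt (cardD1 b) inE q1 pb eqxx /= add1n; congr _.+1.
apply: eq_card => x; rewrite !inE; case: (boolP (x == b)) => [/eqP->|xb] /=.
  by rewrite (negbTE q2).
by rewrite E.
Qed.

Lemma cnt_same I S (Q1 Q2 : pred (dev I S)) (p : pairing I S) b :
  p b != None -> (forall x, x != b -> Q1 x = Q2 x) -> cnt Q1 p = cnt Q2 p.
Proof.
move=> pb E; apply: eq_card => x; rewrite !inE; case: (boolP (x == b)) => [/eqP->|xb].
  by rewrite (negbTE pb) !andbF.
by rewrite E.
Qed.

Lemma sum_filter_enum I S (P : pred (dev I S)) (F : dev I S -> rat) :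
  \sum_(c <- [seq x <- enum (dev I S) | P x]) F c = \sum_(c | P c) F c.
Proof. by rewrite big_filter big_enum_cond; apply: eq_bigl => x; rewrite inE. Qed.

Lemma size_filter_enum I S (P : pred (dev I S)) :
  (size [seq x <- enum (dev I S) | P x])%:R = \sum_(c | P c) (1 : rat).
Proof. by rewrite -sum1_size natr_sum sum_filter_enum. Qed.

Lemma sum_cnt I S (Q : pred (dev I S)) (p : pairing I S) (x : rat) :
  \sum_(c | Q c && (p c == None)) x = x *+ cnt Q p.
Proof. by rewrite sum_const_pred. Qed.

Lemma isCl_inr I S (j k : 'I_S) : isCl j (inr k : dev I S) = (k != j). Proof. by []. Qed.
Lemma isCl_inl I S (j : 'I_S) (u : 'I_I) : isCl j (inl u : dev I S) = false. Proof. by []. Qed.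
Lemma isInf_inr I S ts (k : 'I_S) : isInf ts (inr k : dev I S) = false. Proof. by []. Qed.
Lemma isInf_inl I S ts (u : 'I_I) : isInf ts (inl u : dev I S) = (u \in ts). Proof. by []. Qed.
Lemma isOut_inr I S ts (k : 'I_S) : isOut ts (inr k : dev I S) = false. Proof. by []. Qed.
Lemma isOut_inl I S ts (u : 'I_I) : isOut ts (inl u : dev I S) = (u \notin ts). Proof. by []. Qed.

Lemma dev_case I S (c : dev I S) : (exists u, c = inl u) \/ (exists k, c = inr k).
Proof. by case: c => x; [left|right]; exists x. Qed.

Lemma isInf_cons I S t ts (x : dev I S) : x != inl t -> isInf (t :: ts) x = isInf ts x.
Proof. by case: x => [u|k] //=; rewrite inl_eq in_cons => /negbTE ->. Qed.
Lemma isOut_cons I S t ts (x : dev I S) : x != inl t -> isOut (t :: ts) x = isOut ts x.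
Proof. by case: x => [u|k] //=; rewrite inl_eq in_cons => /negbTE ->. Qed.

Lemma alg_step (x y z : rat) (s a o : nat) :
  (1 + x *+ s + y *+ a + z *+ o) / (1 + s%:R + a%:R + o%:R) =
  (1 + s%:R * x + a%:R * y + o%:R * z) / (1 + s + a + o)%:R.
Proof. by rewrite !mulr_natl !natrD. Qed.

Lemma run_main I S (j : 'I_S) ts : forall n (p : pairing I S), uniq ts ->
  p (inr j) = None -> (cnt (isInf ts) p < n)%N ->
  run ts (@w_infected I S j) p =
  Vf n (cnt (isInf ts) p) (cnt (isCl j) p) (cnt (isOut ts) p).
Proof.
elim: ts => [|t ts IH] n p.
  move=> _ pj _ /=; rewrite /w_infected pj.
  have -> : cnt (isInf [::]) p = 0%N by apply: eq_card0 => -[u|k].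
  by case: n.
move=> /= /andP [tts uts] pj an.
case: (boolP (p (inl t) == None)) => pb /=; last first.
  rewrite (cnt_same (Q1 := isInf (t::ts)) (Q2 := isInf ts) pb) in an *; last exact: isInf_cons.
  rewrite (cnt_same (Q1 := isOut (t::ts)) (Q2 := isOut ts) pb); last exact: isOut_cons.
  exact: IH.
set C := [seq _ <- _ | _].
have jC : inr j \in C by rewrite mem_filter mem_enum inrl_eq pj eqxx.
have -> : (0 < size C)%N by case: (C) jC.
move/eqP: pb => pb.
rewrite (@cnt_D1 _ _ (isInf (t::ts)) (isInf ts) p (inl t)) /= ?mem_head ?pb //; last exact: isInf_cons.
rewrite (@cnt_D1 _ _ (isInf (t::ts)) (isInf ts) p (inl t)) /= ?mem_head ?pb // in an; last exact: isInf_cons.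
case: n an => // n an.
rewrite /= sum_filter_enum size_filter_enum !(@decomp _ _ j t ts p _ tts pj).
set a := cnt (isInf ts) p; set s := cnt (isCl j) p; set o := cnt (isOut (t :: ts)) p.
have oE : cnt (isOut ts) p = o.+1.
  apply: (@cnt_D1 _ _ _ _ p (inl t)) => //=; first by rewrite mem_head.
  by move=> x xt; rewrite isOut_cons.
have step : forall c, p c = None -> c != inl t -> c != inr j ->
    run ts (w_infected j) (pair_up p (inl t) c) =
    Vf n (a - isInf ts c) (s - isCl j c) (o - isOut ts c).
  move=> c pc ct cj.
  have tc : inl t != c by rewrite eq_sym.
  have E1 := cnt_pair (isInf ts) tc pb pc.
  have E2 := cnt_pair (isCl j) tc pb pc.
  have E3 := cnt_pair (isOut ts) tc pb pc.
  rewrite /= (negbTE tts) in E1 E3; rewrite /= in E2.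
  rewrite (IH n) //.
  - congr Vf.
    + by rewrite /a E1; case: (isInf ts c) => /=; lia.
    + by rewrite /s E2; case: (isCl j c) => /=; lia.
    + by move: oE; rewrite E3; case: (isOut ts c) => /=; lia.
  - by apply/eqP; rewrite pair_up_None inrl_eq eq_sym cj pj eqxx.
  - by move: an; rewrite /a E1; case: (isInf ts c) => /=; lia.
have r1 : run ts (w_infected j) (pair_up p (inl t) (inr j)) = 1.
  rewrite run_paired; last by rewrite pair_upE inrl_eq eqxx.
  by rewrite /w_infected pair_upE inrl_eq eqxx.
rewrite r1.
rewrite (eq_bigr (fun _ => Vf n a s.-1 o)); last first.
  move=> c; case: (dev_case c) => [[u ->]|[k ->]] /andP [kj pk]; first by [].
  rewrite ?isCl_inr ?isCl_inl ?isInf_inr ?isInf_inl ?isOut_inr ?isOut_inl in kj.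
  rewrite step; [ | by apply/eqP | by rewrite inrl_eq | by rewrite inr_eq].
  simpl; rewrite kj !subn0; congr Vf; exact: (subn1 s).
rewrite (sum_cnt (isCl j) p (Vf n a s.-1 o)).
rewrite (eq_bigr (fun _ => Vf n a.-1 s o)); last first.
  move=> c; case: (dev_case c) => [[u ->]|[k ->]] /andP [ut pu]; last by move: ut; simpl.
  rewrite ?isCl_inr ?isCl_inl ?isInf_inr ?isInf_inl ?isOut_inr ?isOut_inl in ut.
  rewrite step; [ | by apply/eqP | | by rewrite inlr_eq].
    by congr Vf; [rewrite isInf_inl ut; exact: (subn1 a) | rewrite isCl_inl; exact: (subn0 s) | rewrite isOut_inl ut; exact: (subn0 o)].
  by rewrite inl_eq; apply: contraNneq tts => <-.
rewrite (sum_cnt (isInf ts) p (Vf n a.-1 s o)).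
rewrite (eq_bigr (fun _ => Vf n a s o.-1)); last first.
  move=> c; case: (dev_case c) => [[u ->]|[k ->]] /andP [ut pu]; last by move: ut; simpl.
  move: ut; rewrite ?isCl_inr ?isCl_inl ?isInf_inr ?isInf_inl ?isOut_inr ?isOut_inl in_cons negb_or => /andP [ut uts'].
  rewrite step; [ | by apply/eqP | by rewrite inl_eq | by rewrite inlr_eq].
  by congr Vf; [rewrite isInf_inl (negbTE uts'); exact: (subn0 a) | rewrite isCl_inl; exact: (subn0 s) | rewrite isOut_inl uts'; exact: (subn1 o)].
rewrite (sum_cnt (isOut (t :: ts)) p (Vf n a s o.-1)) !sum_cnt.
exact: (alg_step (Vf n a s.-1 o) (Vf n a.-1 s o) (Vf n a s o.-1) s a o).
Qed.

Lemma empty_None I S (x : dev I S) : empty_pairing I S x = None.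
Proof. by rewrite ffunE. Qed.

Lemma cnt_I I S : cnt (isInf (enum 'I_I)) (empty_pairing I S) = I.
Proof.
have inj : injective (fun u : 'I_I => (inl u : dev I S)) by move=> u v [].
rewrite /cnt -[X in _ = X](card_ord I) -(card_codom inj).
apply: eq_card => x; rewrite !inE empty_None eqxx andbT.
case: (dev_case x) => [[u ->]|[k ->]].
  by rewrite isInf_inl mem_enum codom_f.
rewrite isInf_inr; symmetry; apply/negP => /codomP [u] [] //.
Qed.

Lemma cnt_C I S (j : 'I_S) : cnt (isCl j) (empty_pairing I S) = S.-1.
Proof.
have inj : injective (fun u : 'I_S => (inr u : dev I S)) by move=> u v [].
have S0 : (0 < S)%N := leq_ltn_trans (leq0n _) (ltn_ord j).
have := card_codom inj; rewrite card_ord (cardD1 (inr j)) codom_f add1n => H.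
apply: eq_add_S; rewrite prednK // -[X in _ = X]H; congr _.+1.
apply: eq_card => x; rewrite !inE empty_None eqxx andbT.
case: (dev_case x) => [[u ->]|[k ->]].
  rewrite isCl_inl; symmetry; apply/negP => /andP [_] /codomP [v] [] //.
by rewrite isCl_inr codom_f inr_eq andbT.
Qed.

Lemma cnt_O I S : cnt (isOut (enum 'I_I)) (empty_pairing I S) = 0%N.
Proof.
apply: eq_card0 => x; rewrite !inE.
by case: (dev_case x) => [[u ->]|[k ->]]; rewrite ?isOut_inl ?isOut_inr ?mem_enum.
Qed.

Lemma Pw_V I S (j : 'I_S) : Pw I j = Vf I.+1 I S.-1 0.
Proof.
rewrite /Pw (run_main (n := I.+1)) ?enum_uniq ?empty_None //; last by rewrite cnt_I.
by rewrite cnt_I cnt_C cnt_O.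
Qed.

Lemma Vf_S n a s o : Vf n.+1 a.+1 s o =
  (1 + s%:R * Vf n a s.-1 o + a%:R * Vf n a.-1 s o + o%:R * Vf n a s o.-1) / (1 + s + a + o)%:R.
Proof. by []. Qed.

Theorem mainTheorem1 :
  (forall (S : nat) (j : 'I_S), Pw 0 j = 0) /\
  (forall (S : nat) (j : 'I_S), Pw 1 j = 1 / S%:R) /\
  (forall (I S : nat) (j : 'I_S), (2 <= I)%N ->
     Pw I j = 1 / (I + S - 1)%:R
              + (S - 1)%:R / (I + S - 1)%:R * P (I - 1) (S - 1)
              + (I - 1)%:R / (I + S - 1)%:R * P (I - 2) S).
Proof.
split; first by move=> S j; rewrite Pw_V.
split.
  move=> [|S] j; first by case: j.
  rewrite Pw_V /= !mulr0 !addr0 !addn0 add1n.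
  by rewrite -[in RHS](addr0 1).
move=> [|[|I]] [|S] j // _; first by case: j.
rewrite Pw_V Vf_S.
have -> : (I.+2 + S.+1 - 1 = I.+2 + S)%N by lia.
have -> : (I.+2 - 1 = I.+1)%N by lia.
have -> : (I.+2 - 2 = I)%N by lia.
have -> : (S.+1 - 1 = S)%N by lia.
have -> : P I S.+1 = Vf I.+2 I S 0.
  by rewrite /P Pw_V (@Vf_fuel I.+1 I.+2).
rewrite mul0r addr0 succnK.
have -> : (1 + S + I.+1 + 0)%N = (I.+2 + S)%N by lia.
have nz : (I.+2 + S)%:R != 0 :> rat by rewrite pnatr_eq0.
move: nz; set d := (I.+2 + S)%:R; move=> nz.
case: S d nz j => [|S] d nz j.
  rewrite /P !mul0r !addr0.
  by field.
rewrite /P Pw_V.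
by field.
Qed.
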